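(* For any valid scheme (satisfying (C1)–(C8)) with $N\ge2$, $K\ge2$, \[ \frac{N}{N-1}\,\rho_U+N\rho_S\ \ge\ \frac{N}{N-1}. \]
   Context: Model (SPIR with user-side common randomness). There are $N\ge1$ non-colluding databases, each storing the same $K\ge2$ messages $W_1,\dots,W_K$. Each message consists of $L$ i.i.d. symbols uniform over a sufficiently large finite field $\mathbb{F}_q$; entropies are in $q$-ary units, so $H(W_k)=L$ and $H(W_{1:K})=KL$. The databases share server-side common randomness $\mathcal{R}_S$, unknown to the user. The user holds user-side common randomness $\mathcal{R}_U$, a subset of the components of $\mathcal{R}_S$, unknown to the databases except for its size (uniform over subsets of given cardinality). $\mathcal{F}$ is the user's retrieval-strategy randomness. To retrieve $W_k$ the user sends $Q_n^{[k,\mathcal{R}_U]}$ to database $n$, receiving $A_n^{[k,\mathcal{R}_U]}$; $W_{\bar k}=\{W_j:j\ne k\}$. A valid scheme satisfies for all $k,n,\mathcal{R}_U$: (C1) $I(W_{1:K};k,\mathcal{F},\mathcal{R}_S,\mathcal{R}_U)=0$; (C2) $I(Q_{1:N}^{[k,\mathcal{R}_U]};W_{1:K},\mathcal{R}_S\setminus\mathcal{R}_U)=0$; (C3) $H(Q_{1:N}^{[k,\mathcal{R}_U]}\mid\mathcal{F})=0$; (C4) $H(A_n^{[k,\mathcal{R}_U]}\mid Q_n^{[k,\mathcal{R}_U]},W_{1:K},\mathcal{R}_S)=0$; (C5) $H(W_k\mid\mathcal{F},A_{1:N}^{[k,\mathcal{R}_U]},\mathcal{R}_U)=0$; (C6)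 user privacy: for all $k,k',n,\mathcal{R}_U$ there is $\mathcal{R}_U'$ with $H(\mathcal{R}_U')=H(\mathcal{R}_U)$ and $(Q_n^{[k,\mathcal{R}_U]},A_n^{[k,\mathcal{R}_U]},W_{1:K},\mathcal{R}_S)\sim(Q_n^{[k',\mathcal{R}_U']},A_n^{[k',\mathcal{R}_U']},W_{1:K},\mathcal{R}_S)$; (C7) $I(W_{\bar k};\mathcal{F},A_{1:N}^{[k,\mathcal{R}_U]},\mathcal{R}_U)=0$; (C8) $I(\mathcal{R}_S\setminus\mathcal{R}_U;\mathcal{F},A_{1:N}^{[k,\mathcal{R}_U]},W_k,\mathcal{R}_U)=0$. $\rho_S=H(\mathcal{R}_S)/L$, $\rho_U=H(\mathcal{R}_U)/L$. *)

(* Defs.v *)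
From HB Require Import structures.
From mathcomp Require Import all_boot all_order all_algebra.
From mathcomp Require Import reals exp.
Set Implicit Arguments. Unset Strict Implicit. Unset Printing Implicit Defensive.
Import Order.TTheory GRing.Theory Num.Theory.
Local Open Scope ring_scope.

Section Info.
Variables (R : realType) (Omega : finType) (P : {ffun Omega -> R}).

Definition is_pmf : Prop := (forall w, 0 <= P w) /\ \sum_(w : Omega) P w = 1.

Definition pr (T : finType) (X : Omega -> T) (x : T) : R :=
  \sum_(w : Omega | X w == x) P w.

Definition plogp (b p : R) : R := if p == 0 then 0 else p * (ln p / ln b).

Definition entropy (b : R) (T : finType) (X : Omega -> T) : R :=
  - \sum_(x : T) plogp b (pr X x).

Definition pairRV (T U : finType) (X : Omega -> T) (Y : Omega -> U) :
  Omega -> (T * U)%type := fun w => (X w, Y w).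

Definition condH (b : R) (T U : finType) (X : Omega -> T) (Y : Omega -> U) : R :=
  entropy b (pairRV X Y) - entropy b Y.

Definition minfo (b : R) (T U : finType) (X : Omega -> T) (Y : Omega -> U) : R :=
  entropy b X + entropy b Y - entropy b (pairRV X Y).

End Info.

Section Scheme.
Variables (Omega : finType) (F : finFieldType) (N K L M : nat) (C : finType).

Definition msg_t := {ffun 'I_K -> {ffun 'I_L -> F}}.
(* server-side common randomness R_S: M components with values in C *)
Definition rand_t := {ffun 'I_M -> C}.

Definition Wk (W : Omega -> msg_t) (k : 'I_K) : Omega -> {ffun 'I_L -> F} :=
  fun w => W w k.
Definition Wbar (W : Omega -> msg_t) (k : 'I_K) :
  Omega -> {ffun 'I_K -> option {ffun 'I_L -> F}} :=
  fun w => [ffun j => if j == k then None else Some (W w j)].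
(* the components of R_S indexed by S (the user-side randomness R_U when
   S is the user's subset; R_S \ R_U when S is its complement) *)
Definition restrRV (RS : Omega -> rand_t) (S : {set 'I_M}) :
  Omega -> {ffun 'I_M -> option C} :=
  fun w => [ffun i => if i \in S then Some (RS w i) else None].

End Scheme.

(* A valid SPIR scheme with user-side common randomness.
   - P : probability on the finite sample space Omega;
   - W : all K messages; RS : server-side common randomness (M components);
   - the user-side randomness R_U consists of the components in a subset
     S of 'I_M with #|S| = m (R_U = restrRV RS S);
   - Fr : the user's strategy randomness F;
   - Q k S n, A k S n : query to / answer from database n when retrieving
     W_k with user-side randomness indexed by S.
   Entropies are measured in q-ary units, q = #|F|. *)
Definition valid_scheme (R : realType) (Omega : finType) (P : {ffun Omega -> R})
  (F : finFieldType) (N K L M m : nat) (C TF TQ TA : finType)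
  (W : Omega -> msg_t F K L) (RS : Omega -> rand_t M C) (Fr : Omega -> TF)
  (Q : 'I_K -> {set 'I_M} -> 'I_N -> Omega -> TQ)
  (A : 'I_K -> {set 'I_M} -> 'I_N -> Omega -> TA) : Prop :=
  let q : R := #|F|%:R in
  let RU := restrRV RS in
  let Qall (k : 'I_K) (S : {set 'I_M}) := fun w => [ffun n => Q k S n w] in
  let Aall (k : 'I_K) (S : {set 'I_M}) := fun w => [ffun n => A k S n w] in
  is_pmf P /\
      (forall x : msg_t F K L, pr P W x = 1 / (#|F| ^ (K * L))%:R) /\
      (forall S : {set 'I_M}, #|S| = m ->
         minfo P q W (pairRV Fr (pairRV RS (RU S))) = 0) /\
      (forall (k : 'I_K) (S : {set 'I_M}), #|S| = m ->
         minfo P q (Qall k S) (pairRV W (RU (~: S))) = 0 /\ condH P q (Qall k S) Fr = 0) /\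
      (forall (k : 'I_K) (S : {set 'I_M}) (n : 'I_N), #|S| = m ->
         condH P q (A k S n) (pairRV (Q k S n) (pairRV W RS)) = 0) /\
      (forall (k : 'I_K) (S : {set 'I_M}), #|S| = m ->
         [/\ condH P q (Wk W k) (pairRV Fr (pairRV (Aall k S) (RU S))) = 0,
             minfo P q (Wbar W k) (pairRV Fr (pairRV (Aall k S) (RU S))) = 0 &
             minfo P q (RU (~: S)) (pairRV Fr (pairRV (Aall k S)
                                         (pairRV (Wk W k) (RU S)))) = 0]) /\
      (forall (k k' : 'I_K) (n : 'I_N) (S : {set 'I_M}), #|S| = m ->
         exists2 S' : {set 'I_M}, #|S'| = m /\ entropy P q (RU S') = entropy P q (RU S) &
           forall x, pr P (fun w => (Q k S n w, A k S n w, W w, RS w)) x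
                   = pr P (fun w => (Q k' S' n w, A k' S' n w, W w, RS w)) x).

(* Main.v *)
Require Import Defs.
From HB Require Import structures.
From mathcomp Require Import all_boot all_order all_algebra.
From mathcomp Require Import reals exp.
From mathcomp Require Import ring lra.
Import Order.TTheory GRing.Theory Num.Theory.
Local Open Scope ring_scope.

Module Aux.
Set Implicit Arguments. Unset Strict Implicit. Unset Printing Implicit Defensive.

Section Ent.
Variables (R : realType) (Omega : finType) (P : {ffun Omega -> R}) (b : R).
Hypothesis P0 : forall w, 0 <= P w.
Hypothesis P1 : \sum_w P w = 1.
Hypothesis b1 : 1 < b.

Definition psum (a : pred Omega) := \sum_(v | a v) P v.

Lemma lnb_gt0 : 0 < ln b. Proof. exact: ln_gt0. Qed.

Lemma entropyE (T : finType) (X : Omega -> T) :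
  entropy P b X = - (\sum_w P w * ln (psum (fun v => X v == X w))) / ln b.
Proof.
rewrite /entropy.
have -> : \sum_w P w * ln (psum (fun v => X v == X w))
        = \sum_x pr P X x * ln (pr P X x).
  rewrite (partition_big X predT) //=; apply: eq_bigr => x _.
  rewrite /pr big_distrl /=; apply: eq_bigr => w /eqP <-; done.
rewrite mulNr big_distrl /=; congr (- _); apply: eq_bigr => x _.
rewrite /plogp; case: eqP => [->|_]; first by rewrite !mul0r.
by rewrite mulrA.
Qed.

Lemma psum_ge0 a : 0 <= psum a.
Proof. by apply: sumr_ge0. Qed.

Lemma psum_sub (a c : pred Omega) : (forall v, a v -> c v) -> psum a <= psum c.
Proof.
move=> ac; rewrite /psum [X in _ <= X]big_mkcond [X in X <= _]big_mkcond.
apply: ler_sum => v _; case av: (a v); first by rewrite ac.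
by case: (c v).
Qed.

Lemma psum_self (a : pred Omega) w : a w -> P w <= psum a.
Proof.
move=> aw; rewrite /psum (bigD1 w) //= lerDl; apply: sumr_ge0 => *; done.
Qed.

Lemma ent_kernel (T U : finType) (X : Omega -> T) (Y : Omega -> U) :
  (forall w v, (X v == X w) = (Y v == Y w)) -> entropy P b X = entropy P b Y.
Proof.
move=> h; rewrite !entropyE; congr (- _ / _); apply: eq_bigr => w _.
by congr (_ * ln _); apply: eq_bigl => v; rewrite h.
Qed.

Lemma ent_mono (T U : finType) (X : Omega -> T) (Y : Omega -> U) :
  (forall w v, X v == X w -> Y v == Y w) -> entropy P b Y <= entropy P b X.
Proof.
move=> h; rewrite !entropyE ler_pM2r ?invr_gt0 ?lnb_gt0 // lerN2.
apply: ler_sum => w _.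
have := P0 w; rewrite le0r => /orP[/eqP->|Pw]; first by rewrite !mul0r.
rewrite ler_pM2l // ler_ln ?posrE.
- by apply: psum_sub => v; apply: h.
- by apply: lt_le_trans Pw (psum_self _).
- apply: lt_le_trans Pw (psum_self _); exact: eqxx.
Qed.

Lemma ln_le_sub1 (x : R) : 0 < x -> ln x <= x - 1.
Proof.
move=> x0; have := expR_ge1Dx (ln x); rewrite lnK ?posrE //; lra.
Qed.


Lemma L1 (S : pred Omega) (p : Omega -> R) :
  (forall w, S w -> psum S <= p w) -> \sum_(w | S w) P w / p w <= 1.
Proof.
move=> h; have := psum_ge0 S; rewrite le0r => /orP[/eqP S0|Spos].
  rewrite big1 // => w Sw.
  by rewrite (psumr_eq0P (fun i _ => P0 i) S0 Sw) mul0r.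
apply: le_trans (_ : \sum_(w | S w) P w / psum S <= 1).
  apply: ler_sum => w Sw; apply: ler_wpM2l; first exact: P0.
  rewrite lef_pV2 ?posrE //; [exact: h | exact: lt_le_trans Spos (h w Sw)].
by rewrite -big_distrl /= -/(psum S) divff ?gt_eqF.
Qed.

Section Sub.
Variables (T1 T2 T3 : finType) (X : Omega -> T1) (Y : Omega -> T2) (Z : Omega -> T3).
Definition pxz w := psum (fun v => (X v == X w) && (Z v == Z w)).
Definition pyz w := psum (fun v => (Y v == Y w) && (Z v == Z w)).
Definition pxyz w := psum (fun v => [&& X v == X w, Y v == Y w & Z v == Z w]).
Definition pz w := psum (fun v => Z v == Z w).

Lemma pz_eq x w : Z x == Z w -> pz w = pz x.
Proof. by move=> /eqP e; rewrite /pz e. Qed.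

Lemma KEY : \sum_w P w * (pxz w * pyz w / (pxyz w * pz w)) <= 1.
Proof.
pose G x y w := if (X x == X w) && (Z x == Z w) && ((Y y == Y w) && (Z y == Z w))
  then P x * P y * (P w / (pxyz w * pz w)) else 0.
have E0 : \sum_w P w * (pxz w * pyz w / (pxyz w * pz w))
     = \sum_w \sum_x \sum_y G x y w.
  apply: eq_bigr => w _.
  set D := (pxyz w * pz w); rewrite /pxz /pyz /psum !(big_mkcond (fun v => _ && _)) /=.
  rewrite [X in _ = X](eq_bigr (fun x => (if (X x == X w) && (Z x == Z w) then P x else 0)
     * \sum_y (if (Y y == Y w) && (Z y == Z w) then P y else 0) * (P w / D))).
    rewrite -big_distrl -big_distrl /=; by rewrite !mulrA [_ * P w]mulrC !mulrA.
  move=> x _; rewrite big_distrr /=; apply: eq_bigr => y _.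
  rewrite /G; case: ((X x == X w) && (Z x == Z w)); case: ((Y y == Y w) && (Z y == Z w)); by rewrite /= ?mul0r ?mulr0 ?mul0r ?mulrA //.
rewrite E0 exchange_big /=.
under eq_bigr => x _ do rewrite exchange_big /=.
apply: le_trans (_ : \sum_x \sum_y (if Z y == Z x then P x * P y / pz x else 0) <= 1).
  apply: ler_sum => x _; apply: ler_sum => y _.
  have := P0 x; rewrite le0r => /orP[/eqP Px0 | Pxpos].
    rewrite big1 ?Px0 ?mul0r ?if_same // => w _; by rewrite /G Px0 !mul0r if_same.
  have pzx : 0 < pz x by apply: lt_le_trans Pxpos (psum_self _); exact: eqxx.
  pose S w := (X x == X w) && (Z x == Z w) && ((Y y == Y w) && (Z y == Z w)).
  have -> : \sum_w G x y w = P x * P y / pz x * \sum_(w | S w) P w / pxyz w.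
    rewrite big_distrr /= [RHS]big_mkcond /=; apply: eq_bigr => w _.
    rewrite /G -/(S w); case Sw: (S w) => //.
    move: Sw => /andP[/andP[_ zxw] _]; rewrite (pz_eq zxw).
    by rewrite invfM; ring.
  case: eqP => hzy.
    rewrite -[X in _ <= X]mulr1; apply: ler_wpM2l.
      by rewrite divr_ge0 ?mulr_ge0 // ltW.
    apply: L1 => w Sw; apply: psum_sub => v Sv.
    move: Sw Sv => /andP[/andP[/eqP xw /eqP zxw] /andP[/eqP yw _]].
    move=> /andP[/andP[/eqP xv /eqP zxv] /andP[/eqP yv _]].
    by rewrite -xv -xw -yv -yw -zxv -zxw !eqxx.
  rewrite big_pred0 ?mulr0 // => w; rewrite /S.
  apply/negP => /andP[/andP[_ /eqP a] /andP[_ /eqP c]]; apply: hzy; by rewrite c a.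
rewrite -P1 le_eqVlt; apply/orP; left; apply/eqP; apply: eq_bigr => x _.
rewrite -big_mkcond /=.
rewrite (eq_bigr (fun y => P x / pz x * P y)); last by move=> y _; rewrite mulrAC.
rewrite -big_distrr /=.
have -> : \sum_(y | Z y == Z x) P y = pz x by [].
case: (eqVneq (pz x) 0) => [pz0|pzn0]; last by rewrite divfK.
have Px0 : P x = 0.
  apply/le_anti; rewrite P0 andbT -pz0; apply: psum_self; exact: eqxx.
by rewrite Px0 pz0 !mul0r.
Qed.

Lemma ent_submod : entropy P b (pairRV (pairRV X Y) Z) + entropy P b Z
   <= entropy P b (pairRV X Z) + entropy P b (pairRV Y Z).
Proof.
rewrite !entropyE.
rewrite (eq_bigr (fun w => P w * ln (pxyz w))); last first.
  move=> w _; congr (_ * ln _); apply: eq_bigl => v; by rewrite /pairRV !xpair_eqE -andbA.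
have ez : \sum_w P w * ln (psum (fun v => Z v == Z w)) = \sum_w P w * ln (pz w) by [].
rewrite ez.
have exz : \sum_w P w * ln (psum (fun v => pairRV X Z v == pairRV X Z w)) = \sum_w P w * ln (pxz w).
  apply: eq_bigr => w _; congr (_ * ln _); apply: eq_bigl => v; by rewrite /pairRV !xpair_eqE.
have eyz : \sum_w P w * ln (psum (fun v => pairRV Y Z v == pairRV Y Z w)) = \sum_w P w * ln (pyz w).
  apply: eq_bigr => w _; congr (_ * ln _); apply: eq_bigl => v; by rewrite /pairRV !xpair_eqE.
rewrite exz eyz.
have H : \sum_w P w * (ln (pxz w) + ln (pyz w) - ln (pxyz w) - ln (pz w)) <= 0.
  apply: le_trans (_ : \sum_w P w * (pxz w * pyz w / (pxyz w * pz w) - 1) <= 0).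
    apply: ler_sum => w _.
    have := P0 w; rewrite le0r => /orP[/eqP ->|Pw]; first by rewrite !mul0r.
    apply: ler_wpM2l; first exact: ltW.
    have a : 0 < pxz w by apply: lt_le_trans Pw (psum_self _); rewrite !eqxx.
    have c : 0 < pyz w by apply: lt_le_trans Pw (psum_self _); rewrite !eqxx.
    have d : 0 < pxyz w by apply: lt_le_trans Pw (psum_self _); rewrite !eqxx.
    have e : 0 < pz w by apply: lt_le_trans Pw (psum_self _); rewrite !eqxx.
    have -> : ln (pxz w) + ln (pyz w) - ln (pxyz w) - ln (pz w)
          = ln (pxz w * pyz w / (pxyz w * pz w)).
      rewrite ln_div ?posrE ?mulr_gt0 // !lnM ?posrE //; lra.
    apply: ln_le_sub1; by rewrite divr_gt0 ?mulr_gt0.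
  rewrite (eq_bigr (fun w => P w * (pxz w * pyz w / (pxyz w * pz w)) - P w)); last first.
    by move=> w _; rewrite mulrBr mulr1.
  rewrite sumrB P1 subr_le0; exact: KEY.
have E : \sum_w P w * (ln (pxz w) + ln (pyz w) - ln (pxyz w) - ln (pz w))
  = \sum_w P w * ln (pxz w) + \sum_w P w * ln (pyz w) - \sum_w P w * ln (pxyz w)
    - \sum_w P w * ln (pz w).
  rewrite (eq_bigr (fun w => P w * ln (pxz w) + P w * ln (pyz w) - P w * ln (pxyz w) - P w * ln (pz w))); last by move=> w _; ring.
  by rewrite !sumrB big_split.
have lb := lnb_gt0.
rewrite -!mulrDl ler_pM2r ?invr_gt0 //.
lra.
Qed.
End Sub.


Definition kfiner (T U : finType) (X : Omega -> T) (Y : Omega -> U) :=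
  forall w v, X v == X w -> Y v == Y w.
Definition kjoin (T U V : finType) (J : Omega -> T) (X : Omega -> U) (Y : Omega -> V) :=
  forall w v, (J v == J w) = (X v == X w) && (Y v == Y w).

Notation H := (entropy P b).

Lemma submodK (T1 T2 T3 T4 : finType) (A : Omega -> T1) (B : Omega -> T2)
  (J : Omega -> T3) (M : Omega -> T4) :
  kjoin J A B -> kfiner A M -> kfiner B M -> H J + H M <= H A + H B.
Proof.
move=> hJ hA hB.
have -> : H J = H (pairRV (pairRV A B) M).
  apply: ent_kernel => w v; rewrite /pairRV !xpair_eqE hJ.
  case e1: (A v == A w); case e2: (B v == B w) => //=.
  by rewrite (hA _ _ e1).
have -> : H A = H (pairRV A M).
  apply: ent_kernel => w v; rewrite /pairRV !xpair_eqE.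
  by case e1: (A v == A w) => //=; rewrite (hA _ _ e1).
have -> : H B = H (pairRV B M).
  apply: ent_kernel => w v; rewrite /pairRV !xpair_eqE.
  by case e1: (B v == B w) => //=; rewrite (hB _ _ e1).
exact: ent_submod.
Qed.

Lemma monoK (T U : finType) (X : Omega -> T) (Y : Omega -> U) :
  kfiner X Y -> H Y <= H X.
Proof. exact: ent_mono. Qed.

Lemma eqK (T U : finType) (X : Omega -> T) (Y : Omega -> U) :
  (forall w v, (X v == X w) = (Y v == Y w)) -> H X = H Y.
Proof. exact: ent_kernel. Qed.

Lemma detK (T1 T2 T3 T4 T5 : finType) (Y : Omega -> T1) (A1 : Omega -> T2)
  (J1 : Omega -> T3) (A2 : Omega -> T4) (J2 : Omega -> T5) :
  H J1 = H A1 -> kjoin J1 A1 Y -> kjoin J2 A2 Y -> kfiner A2 A1 -> H J2 = H A2.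
Proof.
move=> e h1 h2 f.
have := @submodK _ _ _ _ A2 J1 J2 A1.
have [] : kjoin J2 A2 J1 /\ kfiner A2 A1 /\ kfiner J1 A1.
  split; first by move=> w v; rewrite h2 h1; case e1: (A2 v == A2 w) => //=; rewrite (f _ _ e1).
  split=> // w v; rewrite h1 => /andP[] //.
move=> j [f1 f2] /(_ j f1 f2); rewrite e => hle.
apply/le_anti; rewrite (monoK (_ : kfiner J2 A2)) ?andbT; first lra.
by move=> w v; rewrite h2 => /andP[].
Qed.

Lemma ent_const : H (fun _ : Omega => tt) = 0.
Proof.
rewrite entropyE.
rewrite (eq_bigr (fun w => P w * ln 1)); first by rewrite ln1 big1 ?oppr0 ?mul0r // => *; rewrite mulr0.
move=> w _; congr (_ * ln _); rewrite /psum -P1; apply: eq_bigl => v //.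
Qed.

Lemma ent_ge0 (T : finType) (X : Omega -> T) : 0 <= H X.
Proof. rewrite -ent_const; apply: monoK => w v _; exact: eqxx. Qed.

Lemma subaddK (T1 T2 T3 : finType) (A : Omega -> T1) (B : Omega -> T2) (J : Omega -> T3) :
  kjoin J A B -> H J <= H A + H B.
Proof.
move=> h; have := @submodK _ _ _ _ A B J (fun _ : Omega => tt) h.
rewrite ent_const addr0; apply=> w v _; exact: eqxx.
Qed.


Lemma mi_monoK (T1 T2 T3 T4 T5 T6 : finType) (X : Omega -> T1) (Y : Omega -> T2)
  (J : Omega -> T3) (X' : Omega -> T4) (Y' : Omega -> T5) (J' : Omega -> T6) :
  kfiner X' X -> kfiner Y' Y -> kjoin J X Y -> kjoin J' X' Y' ->
  H X + H Y - H J <= H X' + H Y' - H J'.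
Proof.
move=> fX fY hJ hJ'.
have s1 := @submodK _ _ _ _ X' J (pairRV X' Y) X.
have s2 := @submodK _ _ _ _ Y' (pairRV X' Y) J' Y.
have h1 : H (pairRV X' Y) + H X <= H X' + H J.
  apply: s1.
  - move=> w v; rewrite /pairRV xpair_eqE hJ.
    by case e: (X' v == X' w) => //=; rewrite (fX _ _ e).
  - done.
  - by move=> w v; rewrite hJ => /andP[].
have h2 : H J' + H Y <= H Y' + H (pairRV X' Y).
  apply: s2.
  - move=> w v; rewrite /pairRV xpair_eqE hJ'.
    case e: (Y' v == Y' w); rewrite ?(fY _ _ e) ?andbF ?andbT //.
  - done.
  - by move=> w v; rewrite /pairRV xpair_eqE => /andP[].
lra.
Qed.

End Ent.

Section Transfer.
Variables (R : realType) (Omega : finType) (P : {ffun Omega -> R}) (b : R).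

Lemma pr_comp (T U : finType) (X : Omega -> T) (f : T -> U) y :
  pr P (fun w => f (X w)) y = \sum_(x | f x == y) pr P X x.
Proof.
rewrite /pr (partition_big X (fun x => f x == y)) //=.
apply: eq_bigr => x /eqP fx; apply: eq_bigl => w.
by case: (X w =P x) => [->|_]; rewrite ?fx ?eqxx ?andbF.
Qed.

Lemma ent_transfer (T U : finType) (X1 X2 : Omega -> T) (f : T -> U) (Y1 Y2 : Omega -> U) :
  (forall x, pr P X1 x = pr P X2 x) ->
  (forall w, Y1 w = f (X1 w)) -> (forall w, Y2 w = f (X2 w)) ->
  entropy P b Y1 = entropy P b Y2.
Proof.
move=> hp h1 h2; rewrite /entropy; congr (- _); apply: eq_bigr => y _.
have -> : pr P Y1 y = pr P (fun w => f (X1 w)) y by apply: eq_bigl => w; rewrite h1.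
have -> : pr P Y2 y = pr P (fun w => f (X2 w)) y by apply: eq_bigl => w; rewrite h2.
by rewrite !pr_comp; congr plogp; apply: eq_bigr => x _; rewrite hp.
Qed.

Lemma pr_sum (T : finType) (X : Omega -> T) : \sum_x pr P X x = \sum_w P w.
Proof. by rewrite (partition_big X predT). Qed.

End Transfer.

Section Unif.
Variables (R : realType) (Omega : finType) (P : {ffun Omega -> R}).
Variables (F : finFieldType) (K L : nat) (W : Omega -> msg_t F K L) (k : 'I_K).
Hypothesis P1 : \sum_w P w = 1.
Hypothesis hW : forall x : msg_t F K L, pr P W x = 1 / (#|F| ^ (K * L))%:R.

Lemma card_F_gt1 : (1 < #|F|)%N.
Proof.
apply/card_gt1P; exists 0, 1; split => //; rewrite eq_sym; exact: oner_neq0.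
Qed.

Lemma ent_unif : entropy P (#|F|%:R : R) (Wk W k) = L%:R.
Proof.
set c := 1 / (#|F| ^ (K * L))%:R : R.
have e1 : forall y, pr P (Wk W k) y = \sum_(x : msg_t F K L | x k == y) c.
  move=> y; rewrite (pr_comp P W (fun x : msg_t F K L => x k)).
  by apply: eq_bigr => x _; rewrite hW.
have e2 : forall y, pr P (Wk W k) y = pr P (Wk W k) 0.
  move=> y; rewrite !e1.
  pose h (x : msg_t F K L) : msg_t F K L := [ffun i => if i == k then x i + (y - 0) else x i].
  have hinj : injective h.
    move=> x1 x2 /ffunP e; apply/ffunP => i; have := e i; rewrite !ffunE.
    by case: (i == k) => //; apply: addIr.
  rewrite (reindex_inj hinj) /=; apply: eq_bigl => x; rewrite /h ffunE eqxx.
  rewrite subr0; apply/eqP/eqP => [e|->]; last by rewrite add0r.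
  by apply: (addIr y); rewrite add0r.
set p0 := pr P (Wk W k) 0.
have cardB : #|{ffun 'I_L -> F}| = (#|F| ^ L)%N by rewrite card_ffun card_ord.
have hp0 : p0 * (#|F| ^ L)%:R = 1.
  rewrite mulr_natr.
  have h : \sum_y pr P (Wk W k) y = 1 by rewrite pr_sum.
  rewrite (eq_bigr (fun _ => p0)) in h; last by move=> y _; exact: e2.
  by rewrite sumr_const card_ffun card_ord in h.
have q1 : 1 < (#|F|%:R : R) by rewrite ltr1n card_F_gt1.
have q0 : 0 < (#|F|%:R : R) by apply: lt_trans q1.
have qL : 0 < ((#|F| ^ L)%:R : R) by rewrite ltr0n expn_gt0 (ltn_trans _ card_F_gt1).
have p0E : p0 = ((#|F| ^ L)%:R)^-1.
  by apply: (@mulIf _ ((#|F|^L)%:R)); rewrite ?gt_eqF // hp0 mulVf ?gt_eqF.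
rewrite /entropy (eq_bigr (fun _ => plogp #|F|%:R p0)) => [|y _]; last by rewrite e2.
rewrite sumr_const card_ffun card_ord /plogp p0E invr_eq0 gt_eqF //.
have lq : 0 < ln (#|F|%:R : R) by apply: ln_gt0.
rewrite lnV ?posrE // natrX lnXn //.
have xL : ((#|F|%:R : R) ^+ L) != 0 by rewrite expf_neq0 // gt_eqF.
have e : forall (a : R) (n : nat), a *- n = - (a * n%:R) by move=> a n; rewrite mulr_natr.
rewrite !e natrX.
field; rewrite xL gt_eqF //.
Qed.

End Unif.

Section Tup.
Variables (R : realType) (Omega : finType) (P : {ffun Omega -> R}) (b : R).
Hypothesis P0 : forall w, 0 <= P w.
Hypothesis P1 : \sum_w P w = 1.
Hypothesis b1 : 1 < b.
Notation H := (entropy P b).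

Lemma ent_tuple (n : nat) (T TZ : finType) (Xs : 'I_n -> Omega -> T) (Z : Omega -> TZ) :
  H (pairRV (fun w => [ffun i => Xs i w]) Z) - H Z
  <= \sum_i (H (pairRV (Xs i) Z) - H Z).
Proof.
pose B m w := [ffun i : 'I_n => if (i < m)%N then Some (Xs i w) else None].
have keyB : forall m w v, (B m v == B m w) = [forall (i : 'I_n | (i < m)%N), Xs i v == Xs i w].
  move=> m w v; apply/eqP/forallP => [e i|h].
    apply/implyP => im; have := congr1 (fun f : {ffun _} => f i) e; rewrite !ffunE im => -[->].
    exact: eqxx.
  apply/ffunP => i; rewrite !ffunE; case: ifP => im //.
  by have /implyP/(_ im)/eqP-> := h i.
have ind : forall m, (m <= n)%N ->
    H (pairRV (B m) Z) - H Z <= \sum_(i : 'I_n | (i < m)%N) (H (pairRV (Xs i) Z) - H Z).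
  elim=> [|m IH] hm.
    rewrite big_pred0 // (_ : H (pairRV (B 0%N) Z) = H Z) ?subrr //.
    apply: eqK => w v; rewrite /pairRV xpair_eqE keyB.
    by have -> : [forall (i : 'I_n | (i < 0)%N), Xs i v == Xs i w] = true by apply/forallP => i.
  have hm' : (m < n)%N := hm.
  pose i0 := Ordinal hm'.
  have sub := @submodK R Omega P b P0 P1 b1 _ _ _ _
     (pairRV (Xs i0) Z) (pairRV (B m) Z) (pairRV (B m.+1) Z) Z.
  have hs : H (pairRV (B m.+1) Z) + H Z <= H (pairRV (Xs i0) Z) + H (pairRV (B m) Z).
    apply: sub.
  - move=> w v; rewrite /pairRV !xpair_eqE !keyB.
    have -> : [forall (i : 'I_n | (i < m.+1)%N), Xs i v == Xs i w] =
              (Xs i0 v == Xs i0 w) && [forall (i : 'I_n | (i < m)%N), Xs i v == Xs i w].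
      apply/forallP/andP => [h|[h1 /forallP h2] i].
        split; first by have /implyP := h i0; apply; rewrite /= ltnSn.
        apply/forallP => i; apply/implyP => im; have /implyP := h i; apply; exact: ltnW.
      apply/implyP; rewrite ltnS leq_eqVlt => /orP[/eqP e|im].
        by have -> : i = i0 by apply: val_inj.
      by have /implyP := h2 i; apply.
    by case: (Xs i0 v == Xs i0 w); case: (Z v == Z w); case: [forall (i : 'I_n | (i < m)%N), Xs i v == Xs i w].
  - by move=> w v; rewrite /pairRV xpair_eqE => /andP[].
  - by move=> w v; rewrite /pairRV xpair_eqE => /andP[].
  - rewrite (bigD1 i0) /= ?ltnSn //.
    have -> : \sum_(i : 'I_n | (i < m.+1)%N && (i != i0)) (H (pairRV (Xs i) Z) - H Z)
            = \sum_(i : 'I_n | (i < m)%N) (H (pairRV (Xs i) Z) - H Z).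
      apply: eq_bigl => i; rewrite ltnS leq_eqVlt -(inj_eq val_inj) /=.
      by case: (ltngtP i m).
    have := IH (ltnW hm); lra.
have := ind n (leqnn n).
have -> // : H (pairRV (B n) Z) = H (pairRV (fun w => [ffun i => Xs i w]) Z).
  apply: eqK => w v; rewrite /pairRV !xpair_eqE keyB; congr (_ && _).
  apply/forallP/eqP => [h|/ffunP h i]; last by apply/implyP => _; have := h i; rewrite !ffunE => ->.
  apply/ffunP => i; rewrite !ffunE; have /implyP := h i; move/(_ (ltn_ord i)); by move/eqP.
have -> // : \sum_(i : 'I_n | (i < n)%N) (H (pairRV (Xs i) Z) - H Z) = \sum_i (H (pairRV (Xs i) Z) - H Z).
  by apply: eq_bigl => i; rewrite ltn_ord.
Qed.

End Tup.

Ltac bsolve := first [ done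
  | (let h := fresh in intro h; first [discriminate | done])
  | match goal with |- context [?x == ?y] => case: (x == y); bsolve end ].

Definition Oth (N : nat) (T : Type) (Xs : 'I_N -> T) (j : 'I_N) :=
  [ffun n => if n == j then None else Some (Xs n)].

Lemma dFF (Omega : finType) (N : nat) (T : finType) (Xs : 'I_N -> Omega -> T) j w v :
  ([ffun n => Xs n v] == [ffun n => Xs n w]) =
  (Xs j v == Xs j w) && (Oth (fun n => Xs n v) j == Oth (fun n => Xs n w) j).
Proof.
apply/eqP/andP => [e|[/eqP e1 /eqP e2]].
  have e' : forall n, Xs n v = Xs n w.
    by move=> n; have := congr1 (fun f : {ffun _} => f n) e; rewrite !ffunE.
  by rewrite e' eqxx; split => //; apply/eqP/ffunP => n; rewrite !ffunE e'.
apply/ffunP => n; rewrite !ffunE; case: (eqVneq n j) => [->//|nj].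
by have := congr1 (fun f : {ffun _} => f n) e2; rewrite !ffunE (negbTE nj) => -[].
Qed.

Section Main.
Variables (R : realType) (Omega : finType) (P : {ffun Omega -> R}) (b : R).
Hypothesis P0 : forall w, 0 <= P w.
Hypothesis P1 : \sum_w P w = 1.
Hypothesis b1 : 1 < b.
Variables (N' : nat) (TW TWk TWb TF TU TV TRS TQ TA : finType).
Variables (W : Omega -> TW) (Wk : Omega -> TWk) (Wb : Omega -> TWb) (F : Omega -> TF)
  (U : Omega -> TU) (V : Omega -> TV) (RS : Omega -> TRS)
  (Qs : 'I_N'.+1 -> Omega -> TQ) (As : 'I_N'.+1 -> Omega -> TA).
Notation H := (entropy P b).
Notation Qall := (fun w => [ffun n => Qs n w]).
Notation Aall := (fun w => [ffun n => As n w]).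
Hypothesis dW : forall w v, (W v == W w) = (Wk v == Wk w) && (Wb v == Wb w).
Hypothesis dRS : forall w v, (RS v == RS w) = (U v == U w) && (V v == V w).
Hypothesis hC1 : H W + H (pairRV F (pairRV RS U)) - H (pairRV W (pairRV F (pairRV RS U))) = 0.
Hypothesis hC3 : H (pairRV Qall F) - H F = 0.
Hypothesis hC4 : forall j, H (pairRV (As j) (pairRV (Qs j) (pairRV W RS)))
                         - H (pairRV (Qs j) (pairRV W RS)) = 0.
Hypothesis hC5 : H (pairRV Wk (pairRV F (pairRV Aall U))) - H (pairRV F (pairRV Aall U)) = 0.
Hypothesis hC7 : H Wb + H (pairRV F (pairRV Aall U)) - H (pairRV Wb (pairRV F (pairRV Aall U))) = 0.
Hypothesis hC8 : H V + H (pairRV F (pairRV Aall (pairRV Wk U)))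
   - H (pairRV V (pairRV F (pairRV Aall (pairRV Wk U)))) = 0.
Hypothesis hP : forall j, H Wk + H (pairRV (As j) (Qs j)) - H (pairRV Wk (pairRV (As j) (Qs j))) = 0.

Ltac bs j := move=> w v; rewrite /pairRV /= ?xpair_eqE ?dW ?dRS ?(dFF As j) ?(dFF Qs j); bsolve.

Notation FU := (pairRV F U).
Notation FAU := (pairRV F (pairRV Aall U)).
Notation WFU := (pairRV W FU).
Notation WFAU := (pairRV W FAU).
Notation WkFU := (pairRV Wk FU).
Notation WkFAU := (pairRV Wk FAU).

Let sub := @submodK R Omega P b P0 P1 b1.
Let mono := @monoK R Omega P b P0 b1.
Let eqk := @eqK R Omega P b.
Let det := @detK R Omega P b P0 P1 b1.
Let sadd := @subaddK R Omega P b P0 P1 b1.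
Let mim := @mi_monoK R Omega P b P0 P1 b1.

Lemma f1 : H WkFU = H Wk + H FU.
Proof.
have a := sadd (J := WkFU) (A := Wk) (B := FU) ltac:(bs (@ord0 N')).
have c := mim (X := Wk) (Y := FU) (J := WkFU) (X' := W) (Y' := pairRV F (pairRV RS U))
  (J' := pairRV W (pairRV F (pairRV RS U))) ltac:(bs (@ord0 N')) ltac:(bs (@ord0 N')) ltac:(bs (@ord0 N')) ltac:(bs (@ord0 N')).
have := hC1. lra.
Qed.


Lemma star : H Wk <= H WFU + H FAU - H WFAU - H FU.
Proof.
have e1 := f1.
have f3 := sub (A := WFU) (B := WkFAU) (J := WFAU) (M := WkFU)
  ltac:(bs (@ord0 N')) ltac:(bs (@ord0 N')) ltac:(bs (@ord0 N')).
have := hC5. lra.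
Qed.

Lemma qdet j : H (pairRV (Qs j) F) = H F.
Proof.
have m1 := mono (X := pairRV Qall F) (Y := pairRV (Qs j) F) ltac:(bs j).
have m2 := mono (X := pairRV (Qs j) F) (Y := F) ltac:(bs j).
have := hC3. lra.
Qed.

Lemma Dj j : H (pairRV W (pairRV (As j) FU)) - H WFU <= H RS - H U.
Proof.
have h1 := det (Y := Qs j) (A1 := F) (J1 := pairRV (Qs j) F) (A2 := pairRV W (pairRV F RS))
  (J2 := pairRV (Qs j) (pairRV W (pairRV F RS))) (qdet j) ltac:(bs j) ltac:(bs j) ltac:(bs j).
have h2 := det (Y := As j) (A1 := pairRV (Qs j) (pairRV W RS))
  (J1 := pairRV (As j) (pairRV (Qs j) (pairRV W RS)))
  (A2 := pairRV (Qs j) (pairRV W (pairRV F RS)))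
  (J2 := pairRV (As j) (pairRV (Qs j) (pairRV W (pairRV F RS))))
  ltac:(have := hC4 j; lra) ltac:(bs j) ltac:(bs j) ltac:(bs j).
have h3 := mono (X := pairRV (As j) (pairRV (Qs j) (pairRV W (pairRV F RS))))
  (Y := pairRV (As j) (pairRV W (pairRV F RS))) ltac:(bs j).
have h5 := mono (X := pairRV (As j) (pairRV W (pairRV F RS)))
  (Y := pairRV W (pairRV (As j) FU)) ltac:(bs j).
have h6 := sub (A := WFU) (B := RS) (J := pairRV W (pairRV F RS)) (M := U)
  ltac:(bs j) ltac:(bs j) ltac:(bs j).
lra.
Qed.


Lemma condF j :
  H (pairRV Wk (pairRV (As j) (pairRV (Qs j) U)))
  + H (pairRV (As j) (pairRV (Qs j) FU))
  - H (pairRV Wk (pairRV (As j) (pairRV (Qs j) FU)))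
  - H (pairRV (As j) (pairRV (Qs j) U)) <= 0.
Proof.
have c1 := eqk (X := pairRV F (pairRV RS U)) (Y := pairRV F RS) ltac:(bs j).
have c2 := eqk (X := pairRV W (pairRV F (pairRV RS U))) (Y := pairRV W (pairRV F RS)) ltac:(bs j).
have c3a := sadd (J := pairRV W RS) (A := W) (B := RS) ltac:(bs j).
have c3b := mim (X := W) (Y := RS) (J := pairRV W RS) (X' := W)
  (Y' := pairRV F (pairRV RS U)) (J' := pairRV W (pairRV F (pairRV RS U)))
  ltac:(bs j) ltac:(bs j) ltac:(bs j) ltac:(bs j).
have c4 := sadd (J := RS) (A := U) (B := V) ltac:(bs j).
have c5 := mim (X := V) (Y := FU) (J := pairRV V FU) (X' := V)
  (Y' := pairRV F (pairRV Aall (pairRV Wk U)))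
  (J' := pairRV V (pairRV F (pairRV Aall (pairRV Wk U))))
  ltac:(bs j) ltac:(bs j) ltac:(bs j) ltac:(bs j).
have c6 := eqk (X := pairRV V FU) (Y := pairRV F RS) ltac:(bs j).
have d1 := det (Y := Qs j) (A1 := F) (J1 := pairRV (Qs j) F) (A2 := pairRV W (pairRV F RS))
  (J2 := pairRV (Qs j) (pairRV W (pairRV F RS))) (qdet j) ltac:(bs j) ltac:(bs j) ltac:(bs j).
have d2 := det (Y := Qs j) (A1 := F) (J1 := pairRV (Qs j) F) (A2 := FU)
  (J2 := pairRV (Qs j) FU) (qdet j) ltac:(bs j) ltac:(bs j) ltac:(bs j).
have d3 := sub (A := pairRV W RS) (B := pairRV (Qs j) U) (J := pairRV (Qs j) (pairRV W RS)) (M := U)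
  ltac:(bs j) ltac:(bs j) ltac:(bs j).
have d5 := det (Y := As j) (A1 := pairRV (Qs j) (pairRV W RS))
  (J1 := pairRV (As j) (pairRV (Qs j) (pairRV W RS)))
  (A2 := pairRV (Qs j) (pairRV W (pairRV F RS)))
  (J2 := pairRV (As j) (pairRV (Qs j) (pairRV W (pairRV F RS))))
  ltac:(have := hC4 j; lra) ltac:(bs j) ltac:(bs j) ltac:(bs j).
have d6 := sub (A := pairRV (As j) (pairRV (Qs j) U)) (B := pairRV (Qs j) FU)
  (J := pairRV (As j) (pairRV (Qs j) FU)) (M := pairRV (Qs j) U)
  ltac:(bs j) ltac:(bs j) ltac:(bs j).
have d7 := sub (A := pairRV (As j) (pairRV (Qs j) (pairRV W RS)))
  (B := pairRV Wk (pairRV (As j) (pairRV (Qs j) FU)))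
  (J := pairRV (As j) (pairRV (Qs j) (pairRV W (pairRV F RS))))
  (M := pairRV Wk (pairRV (As j) (pairRV (Qs j) U)))
  ltac:(bs j) ltac:(bs j) ltac:(bs j).
have := hC1; have := hC8; have := hC4 j.
lra.
Qed.

Lemma Gj j : H WFU + H (pairRV (As j) FU) - H (pairRV W (pairRV (As j) FU)) - H FU <= H U.
Proof.
have eT1 := eqk (X := pairRV Wb WkFU) (Y := WFU) ltac:(bs j).
have eT3 := eqk (X := pairRV Wb (pairRV Wk (pairRV (As j) FU)))
  (Y := pairRV W (pairRV (As j) FU)) ltac:(bs j).
have g2a := sadd (J := pairRV Wb WkFU) (A := Wb) (B := WkFU) ltac:(bs j).
have g2b := mim (X := Wb) (Y := pairRV Wk (pairRV (As j) FU))
  (J := pairRV Wb (pairRV Wk (pairRV (As j) FU))) (X' := Wb) (Y' := WkFAU)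
  (J' := pairRV Wb WkFAU) ltac:(bs j) ltac:(bs j) ltac:(bs j) ltac:(bs j).
have g2c := det (Y := Wk) (A1 := FAU) (J1 := WkFAU) (A2 := pairRV Wb FAU)
  (J2 := pairRV Wb WkFAU) ltac:(have := hC5; lra) ltac:(bs j) ltac:(bs j) ltac:(bs j).
have e1 := f1.
have g4a := det (Y := Qs j) (A1 := F) (J1 := pairRV (Qs j) F) (A2 := pairRV (As j) FU)
  (J2 := pairRV (As j) (pairRV (Qs j) FU)) (qdet j) ltac:(bs j) ltac:(bs j) ltac:(bs j).
have g4b := det (Y := Qs j) (A1 := F) (J1 := pairRV (Qs j) F)
  (A2 := pairRV Wk (pairRV (As j) FU))
  (J2 := pairRV Wk (pairRV (As j) (pairRV (Qs j) FU))) (qdet j) ltac:(bs j) ltac:(bs j) ltac:(bs j).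
have g6 := condF j.
have g7a := sadd (J := pairRV (As j) (pairRV (Qs j) U)) (A := pairRV (As j) (Qs j)) (B := U)
  ltac:(bs j).
have g7b := mono (X := pairRV Wk (pairRV (As j) (pairRV (Qs j) U)))
  (Y := pairRV Wk (pairRV (As j) (Qs j))) ltac:(bs j).
have := hC5; have := hC7; have := hP j.
lra.
Qed.

Lemma mainbound : H Wk <= H U + N'%:R * H RS.
Proof.
have s := star.
have t := @ent_tuple R Omega P b P0 P1 b1 _ _ _ As FU.
have e := eqk (X := pairRV Aall FU) (Y := FAU) ltac:(bs (@ord0 N')).
have d0 := mono (X := WFAU) (Y := pairRV W (pairRV (As ord0) FU)) ltac:(bs (@ord0 N')).
rewrite big_ord_recl /= in t.
have hs : \sum_(i < N') (H (pairRV (As (lift ord0 i)) FU) - H FU) <= \sum_(i < N') H RS.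
  apply: ler_sum => i _; have := Gj (lift ord0 i); have := Dj (lift ord0 i); lra.
rewrite sumr_const card_ord -mulr_natl in hs.
have := Gj ord0; have := Dj ord0.
lra.
Qed.

End Main.

End Aux.
Import Aux.

Theorem lemma10 (R : realType) (Omega : finType) (P : {ffun Omega -> R})
  (F : finFieldType) (N K L M m : nat) (C TF TQ TA : finType)
  (W : Omega -> msg_t F K L) (RS : Omega -> rand_t M C) (Fr : Omega -> TF)
  (Q : 'I_K -> {set 'I_M} -> 'I_N -> Omega -> TQ)
  (A : 'I_K -> {set 'I_M} -> 'I_N -> Omega -> TA) :
  (2 <= N)%N -> (2 <= K)%N -> (1 <= L)%N ->
  @valid_scheme R Omega P F N K L M m C TF TQ TA W RS Fr Q A ->
  forall S : {set 'I_M}, #|S| = m ->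
    let q : R := #|F|%:R in
    let rhoU := entropy P q (restrRV RS S) / L%:R in
    let rhoS := entropy P q RS / L%:R in
    N%:R / (N%:R - 1) * rhoU + N%:R * rhoS >= N%:R / (N%:R - 1).
Proof.
case: N Q A => [|N'] Q A hN //.
move=> hK hL hv S hS; cbv zeta.
set q : R := #|F|%:R.
rewrite /valid_scheme in hv; cbv zeta in hv.
case: hv => [[P0 P1] [hW [hC1 [hC23 [hC4 [hC578 hC6]]]]]].
have b1 : 1 < q by rewrite /q ltr1n card_F_gt1.
pose k := Ordinal (ltn_trans (ltnSn 0) hK).
pose k' := Ordinal hK.
have kk' : k != k' by [].
set U := restrRV RS S.
set V := restrRV RS (~: S).
have dW : forall w v, (W v == W w) = (Wk W k v == Wk W k w) && (Wbar W k v == Wbar W k w).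
  move=> w v; apply/eqP/andP => [e|[/eqP e1 /eqP e2]].
    by rewrite /Wk /Wbar e; split.
  apply/ffunP => i; have := congr1 (fun f : {ffun _} => f i) e2; rewrite /Wbar !ffunE.
  case: (eqVneq i k) => [-> _|_ [] //]; exact: e1.
have dRS : forall w v, (RS v == RS w) = (U v == U w) && (V v == V w).
  move=> w v; apply/eqP/andP => [e|[/eqP e1 /eqP e2]].
    by rewrite /U /V /restrRV e; split.
  apply/ffunP => i.
  have h1 := congr1 (fun f : {ffun _} => f i) e1.
  have h2 := congr1 (fun f : {ffun _} => f i) e2.
  rewrite /U /V /restrRV !ffunE in h1 h2.
  case: (boolP (i \in S)) => iS.
    by move: h1; rewrite iS => -[].
  by move: h2; rewrite inE iS => -[].
have hP : forall j, entropy P q (Wk W k) + entropy P q (pairRV (A k S j) (Q k S j))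
   - entropy P q (pairRV (Wk W k) (pairRV (A k S j) (Q k S j))) = 0.
  move=> j.
  have [S' [hS'm _] hpr] := hC6 k k' j S hS.
  have t2 : entropy P q (pairRV (A k S j) (Q k S j))
          = entropy P q (pairRV (A k' S' j) (Q k' S' j)).
    by apply: (@ent_transfer R Omega P q _ _ _ _ (fun t => (t.1.1.2, t.1.1.1)) _ _ hpr).
  have t3 : entropy P q (pairRV (Wk W k) (pairRV (A k S j) (Q k S j)))
          = entropy P q (pairRV (Wk W k) (pairRV (A k' S' j) (Q k' S' j))).
    have := (@ent_transfer R Omega P q _ _ _ _ (fun t : (TQ * TA * msg_t F K L * rand_t M C)%type => ((t.1.2 k : {ffun 'I_L -> F}), (t.1.1.2, t.1.1.1))) (pairRV (Wk W k) (pairRV (A k S j) (Q k S j))) (pairRV (Wk W k) (pairRV (A k' S' j) (Q k' S' j))) hpr). by apply...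
  rewrite t2 t3.
  have [c5' c7' c8'] := hC578 k' S' hS'm.
  have c3' := (hC23 k' S' hS'm).2.
  rewrite /minfo /condH in c7' c3'.
  have s1 := subaddK P0 P1 b1 (J := pairRV (Wk W k) (pairRV (A k' S' j) (Q k' S' j)))
    (A := Wk W k) (B := pairRV (A k' S' j) (Q k' S' j))
    ltac:(by move=> w v; rewrite /pairRV xpair_eqE).
  have m1 := monoK P0 b1 (X := pairRV (fun w => [ffun n => Q k' S' n w]) Fr)
    (Y := pairRV (Q k' S' j) Fr)
    ltac:(move=> w v; rewrite /pairRV /= ?xpair_eqE ?(dFF (Q k' S') j); bsolve).
  have m2 := monoK P0 b1 (X := pairRV (Q k' S' j) Fr) (Y := Fr)
    ltac:(move=> w v; rewrite /pairRV /= ?xpair_eqE; bsolve).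
  have qd : entropy P q (pairRV (Q k' S' j) Fr) = entropy P q Fr by lra.
  have kf1 : kfiner (Wbar W k') (Wk W k).
    move=> w v /eqP e; have := congr1 (fun f : {ffun _} => f k) e.
    by rewrite /Wbar !ffunE (negbTE kk') /Wk => -[->].
  have mm := mi_monoK P0 P1 b1 (X := Wk W k) (Y := pairRV (A k' S' j) (Q k' S' j))
    (J := pairRV (Wk W k) (pairRV (A k' S' j) (Q k' S' j))) (X' := Wbar W k')
    (Y' := pairRV (Q k' S' j) (pairRV Fr (pairRV (fun w => [ffun n => A k' S' n w]) (restrRV RS S'))))
    (J' := pairRV (Wbar W k') (pairRV (Q k' S' j) (pairRV Fr (pairRV (fun w => [ffun n => A k' S' n w]) (restrRV RS S')))))
    kf1 ltac:(move=> w v; rewrite /pairRV /= ?xpair_eqE ?(dFF (A k' S') j); bsolve)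
    ltac:(by move=> w v; rewrite /pairRV xpair_eqE)
    ltac:(by move=> w v; rewrite /pairRV xpair_eqE).
  have dt1 := detK P0 P1 b1 (Y := Q k' S' j) (A1 := Fr) (J1 := pairRV (Q k' S' j) Fr)
    (A2 := pairRV Fr (pairRV (fun w => [ffun n => A k' S' n w]) (restrRV RS S')))
    (J2 := pairRV (Q k' S' j) (pairRV Fr (pairRV (fun w => [ffun n => A k' S' n w]) (restrRV RS S'))))
    qd ltac:(move=> w v; rewrite /pairRV /= ?xpair_eqE; bsolve)
    ltac:(move=> w v; rewrite /pairRV /= ?xpair_eqE; bsolve)
    ltac:(move=> w v; rewrite /pairRV /= ?xpair_eqE; bsolve).
  have dt2 := detK P0 P1 b1 (Y := Q k' S' j) (A1 := Fr) (J1 := pairRV (Q k' S' j) Fr)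
    (A2 := pairRV (Wbar W k') (pairRV Fr (pairRV (fun w => [ffun n => A k' S' n w]) (restrRV RS S'))))
    (J2 := pairRV (Wbar W k') (pairRV (Q k' S' j) (pairRV Fr (pairRV (fun w => [ffun n => A k' S' n w]) (restrRV RS S')))))
    qd ltac:(move=> w v; rewrite /pairRV /= ?xpair_eqE; bsolve)
    ltac:(move=> w v; rewrite /pairRV /= ?xpair_eqE; bsolve)
    ltac:(move=> w v; rewrite /pairRV /= ?xpair_eqE; bsolve).
  lra.
have [c5 c7 c8] := hC578 k S hS.
have c1 := hC1 S hS.
have c3 := (hC23 k S hS).2.
rewrite /minfo /condH in c1 c3 c5 c7 c8.
have mb := mainbound P0 P1 b1 dW dRS c1 c3
  (fun j => ltac:(have := hC4 k S j hS; rewrite /condH; exact)) c5 c7 c8 hP.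
have lpos : 0 < (L%:R : R) by rewrite ltr0n.
have npos : 0 < (N'%:R : R) by rewrite ltr0n -ltnS.
set x := entropy P q U. set y := entropy P q RS.
have key : L%:R <= x + N'%:R * y.
  by rewrite -(ent_unif k P1 hW); exact: mb.
have -> : (N'.+1%:R - 1 : R) = N'%:R by rewrite -addn1 natrD addrK.
rewrite -subr_ge0.
have -> : N'.+1%:R / N'%:R * (x / L%:R) + N'.+1%:R * (y / L%:R) - N'.+1%:R / N'%:R
   = N'.+1%:R / N'%:R * ((x + N'%:R * y - L%:R) / L%:R).
  by field; rewrite !gt_eqF.
apply: mulr_ge0; first by rewrite divr_ge0 // ltW // ltr0n.
by apply: divr_ge0; [lra | exact: ltW].
Qed.
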